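(* Let $L$ be a subspace of $\bigwedge^{k}V$ and let $h\in[n]$. Suppose $L$ is monomial with respect to $e_h$, i.e. $L=\big(L\cap\bigwedge^{k}V^{(h)}\big)\oplus\big(L\cap(e_{h}\wedge\bigwedge^{k-1}V^{(h)})\big)$. If $1\leq i<j\leq n$ are distinct from $h$, then \begin{align*} N_{j\to i}L & =N_{j\to i}\Big(L\cap\bigwedge^{k}V^{(h)}\Big)\oplus N_{j\to i}\Big(L\cap\big(e_{h}\wedge\bigwedge^{k-1}V^{(h)}\big)\Big)\\ & =\Big(N_{j\to i}L\cap\bigwedge^{k}V^{(h)}\Big)\oplus\Big(N_{j\to i}L\cap\big(e_{h}\wedge\bigwedge^{k-1}V^{(h)}\big)\Big). \end{align*}
   Context: $\mathbb{F}$ is a field (assumed throughout the paper, for expository purposes, to have characteristic not $2$), $V$ is an $n$-dimensional $\mathbb{F}$-vector space with a fixed basis $e_1,\dots,e_n$, and $\bigwedge V$ its exterior algebra. For $j\in[n]$, $V^{(j)}$ is the span of $\{e_l:l\neq j\}$, and $\bigwedge V^{(j)}$ is viewed as a subalgebra of $\bigwedge V$. Slow shift: for distinct $i,j\in[n]$ and nonzero $m\in\bigwedge^kV$, write uniquely $m=x+e_j\wedge y$ with $x\in\bigwedge^kV^{(j)}$, $y\in\bigwedge^{k-1}V^{(j)}$, and set $N_{j\to i}m=x+e_i\wedge y$ if this is nonzero, and $N_{j\to i}m=e_j\wedge y$ otherwise (the limit as $t\to0$ of the projective action of the linear map $e_j\mapsto e_i+te_j$ fixing the other $e_l$). For a subspace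 $L$ of $\bigwedge^kV$, $N_{j\to i}L$ is the span of $\{N_{j\to i}m:m\in L\setminus\{0\}\}$ (and $N_{j\to i}\{0\}=\{0\}$); it has the same dimension as $L$. *)

(* Defs.v *)
(* Exterior algebra of V = F^n with basis e_0..e_{n-1},
   modelled by its standard basis e_S (S ranging over subsets of 'I_n,
   e_S = e_{s_1} /\ ... /\ e_{s_k} with s_1 < ... < s_k). *)
From HB Require Import structures.
From mathcomp Require Import all_boot all_order all_algebra.
Set Implicit Arguments. Unset Strict Implicit. Unset Printing Implicit Defensive.
Import Order.TTheory GRing.Theory.
Local Open Scope ring_scope.

Definition ext (F : fieldType) (n : nat) := {ffun {set 'I_n} -> F^o}.

Section Ext.
Variables (F : fieldType) (n : nat).
Local Notation E := (ext F n).

Definition ebas (S : {set 'I_n}) : E := [ffun T => if T == S then 1 else 0].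
Definition evec (i : 'I_n) : E := ebas [set i].

(* sign of e_S /\ e_T = sgn S T * e_(S :|: T) for disjoint S,T:
   (-1)^(number of inversions (s,t) in S x T with t < s). *)
Definition wsign (S T : {set 'I_n}) : F :=
  (-1) ^+ #|[set p in setX S T | (p.2 < p.1)%N]|.

Definition wedge (x y : E) : E :=
  [ffun U => \sum_(S : {set 'I_n}) \sum_(T : {set 'I_n})
     if [&& [disjoint S & T] & S :|: T == U] then wsign S T * x S * y T else 0].

Definition extk (k : nat) : {vspace E} :=
  <<[seq ebas A | A <- enum [pred A : {set 'I_n} | #|A| == k]]>>%VS.

Definition extk_off (k : nat) (h : 'I_n) : {vspace E} :=
  <<[seq ebas A | A <- enum [pred A : {set 'I_n} | (#|A| == k) && (h \notin A)]]>>%VS.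

(* e_h /\ /\^(k-1) V^(h)  (the zero space when k = 0) *)
Definition ewedge_off (k : nat) (h : 'I_n) : {vspace E} :=
  <<[seq wedge (evec h) (ebas A)
      | A <- enum [pred A : {set 'I_n} | (#|A|.+1 == k) && (h \notin A)]]>>%VS.

(* Unique decomposition m = x + e_j /\ y with x, y in /\V^(j). *)
Definition dec_x (j : 'I_n) (m : E) : E :=
  [ffun T : {set 'I_n} => if j \in T then 0 else m T].
Definition dec_y (j : 'I_n) (m : E) : E :=
  [ffun T : {set 'I_n} => if j \in T then 0 else wsign [set j] T * m (j |: T)].

Definition slow_shift (j i : 'I_n) (m : E) : E :=
  let x := dec_x j m in let y := dec_y j m in
  let c := x + wedge (evec i) y in
  if c != 0 then c else wedge (evec j) y.

(* N_{j -> i} L : the span of { N_{j->i} m : m in L, m <> 0 },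
   represented as a predicate (membership in that span). *)
Definition slow_shift_sp (j i : 'I_n) (L : {vspace E}) (v : E) : Prop :=
  exists s : seq E, (forall m, m \in s -> (m \in L) && (m != 0)) /\
                    v \in <<[seq slow_shift j i m | m <- s]>>%VS.

Definition is_dsum (R P Q : E -> Prop) : Prop :=
  (forall v, R v <-> exists p q, [/\ P p, Q q & v = p + q]) /\
  (forall v, P v -> Q v -> v = 0).

End Ext.

(* Main.v *)
Require Import Defs.
From HB Require Import structures.
From mathcomp Require Import all_boot all_order all_algebra.
Import GRing.Theory.
Local Open Scope ring_scope.

Section Helpers.
Variables (F : fieldType) (n : nat).
Local Notation E := (ext F n).

Lemma span_ind (D : E -> Prop) (X : seq E) (v : E) :
  D 0 -> (forall x y, D x -> D y -> D (x + y)) -> (forall (c : F) x, D x -> D (c *: x)) ->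
  (forall x, x \in X -> D x) -> v \in <<X>>%VS -> D v.
Proof.
move=> D0 DD DZ; elim: X v => [|x X IH] v HX.
  by rewrite span_nil memv0 => /eqP->.
rewrite span_cons => /memv_addP [y Hy [z Hz ->]].
apply: DD.
  by move/vlineP: Hy => [c ->]; apply: DZ; apply: HX; rewrite mem_head.
by apply: IH => // w Hw; apply: HX; rewrite in_cons Hw orbT.
Qed.

Lemma wedge_evec (a : 'I_n) (y : E) U :
  (wedge (evec F a) y) U = if a \in U then wsign F [set a] (U :\ a) * y (U :\ a) else 0.
Proof.
rewrite ffunE (bigD1 [set a]) //= [X in _ + X]big1 ?addr0; last first.
  move=> S /negbTE HS; apply: big1 => T _.
  by rewrite /evec /ebas ffunE HS mulr0 mul0r; case: ifP.
rewrite /evec /ebas.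
under eq_bigr => T _ do rewrite ffunE eqxx mulr1.
rewrite -big_mkcond /=.
case: ifP => aU.
  rewrite (big_pred1 (U :\ a)) // => T /=.
  rewrite disjoints1; apply/andP/eqP => [[aT /eqP <-]|->].
    by rewrite setU1K.
  by rewrite !inE eqxx /= setD1K.
rewrite big_pred0 // => T /=.
apply/negbTE; rewrite disjoints1; apply/andP => -[_ /eqP HU].
by rewrite -HU setU11 in aU.
Qed.

Definition supp (Q : pred {set 'I_n}) (v : E) := forall T, ~~ Q T -> v T = 0.

Lemma supp0 Q : supp Q 0. Proof. by move=> T _; rewrite ffunE. Qed.
Lemma suppD Q x y : supp Q x -> supp Q y -> supp Q (x + y).
Proof. by move=> Hx Hy T HT; rewrite ffunE Hx // Hy // addr0. Qed.
Lemma suppZ Q (c : F) x : supp Q x -> supp Q (c *: x).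
Proof. by move=> Hx T HT; rewrite ffunE Hx // scaler0. Qed.

Lemma span_supp Q (X : seq E) v : (forall x, x \in X -> supp Q x) -> v \in <<X>>%VS -> supp Q v.
Proof. apply: span_ind; [exact: supp0|exact: suppD|exact: suppZ]. Qed.

Lemma ebas_decomp (v : E) : v = \sum_T v T *: ebas F T.
Proof.
apply/ffunP => U; rewrite sum_ffunE (bigD1 U) //= big1 ?addr0.
  by rewrite ffunE /ebas ffunE eqxx; exact: (esym (mulr1 _)).
by move=> T /negbTE HT; rewrite ffunE /ebas ffunE eq_sym HT; exact: (mulr0 _).
Qed.

Lemma supp_mem Q (W : {vspace E}) v : supp Q v -> (forall T, Q T -> ebas F T \in W) -> v \in W.
Proof.
move=> Hv HW; rewrite (ebas_decomp v); apply: memv_suml => T _.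
case QT: (Q T); first by apply: memvZ; apply: HW.
by rewrite Hv ?QT // scale0r mem0v.
Qed.

Lemma supp_disj Q1 Q2 v : (forall T, ~~ Q1 T || ~~ Q2 T) -> supp Q1 v -> supp Q2 v -> v = 0.
Proof.
move=> HQ H1 H2; apply/ffunP => T; rewrite ffunE.
by case/orP: (HQ T) => HT; [apply: H1|apply: H2].
Qed.


Lemma ebas_supp (Q : pred {set 'I_n}) A : Q A -> supp Q (ebas F A).
Proof. move=> QA T QT; rewrite ffunE; case: eqP => // TA; by rewrite TA QA in QT. Qed.

Lemma wedge_ebas (a : 'I_n) (A : {set 'I_n}) : a \notin A ->
  wedge (evec F a) (ebas F A) = wsign F [set a] A *: ebas F (a |: A).
Proof.
move=> aA; apply/ffunP => U; rewrite wedge_evec [RHS]ffunE [ebas F (a |: A) U]ffunE.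
case: eqP => [->|HU].
  by rewrite setU11 setU1K // ffunE eqxx.
case: ifP => aU; last by rewrite (_ : _ *: _ = 0) //; exact: (mulr0 _).
rewrite ffunE; case: eqP => [HA|_]; last by rewrite mulr0; exact: (esym (mulr0 _)).
by exfalso; apply: HU; rewrite -HA setD1K.
Qed.

Lemma wsign_neq0 (S T : {set 'I_n}) : wsign F S T != 0 :> F.
Proof. by rewrite /wsign expf_neq0 // oppr_eq0 oner_eq0. Qed.

Variables (i j h : 'I_n) (k : nat).

Definition phi (m : E) : E := dec_x j m + wedge (evec F i) (dec_y j m).
Definition psi (m : E) : E := wedge (evec F j) (dec_y j m).

Lemma slow_shiftE (m : E) : slow_shift j i m = if phi m != 0 then phi m else psi m.
Proof. by []. Qed.

Lemma dec_xD (a b : E) : dec_x j (a + b) = dec_x j a + dec_x j b.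
Proof. by apply/ffunP => T; rewrite !ffunE; case: ifP; rewrite ?addr0. Qed.
Lemma dec_yD (a b : E) : dec_y j (a + b) = dec_y j a + dec_y j b.
Proof. by apply/ffunP => T; rewrite !ffunE; case: ifP; rewrite ?addr0 // mulrDr. Qed.
Lemma wedgeD (c : 'I_n) (a b : E) : wedge (evec F c) (a + b) = wedge (evec F c) a + wedge (evec F c) b.
Proof. by apply/ffunP => T; rewrite wedge_evec [in RHS]ffunE !wedge_evec ffunE; case: ifP; rewrite ?addr0 // mulrDr. Qed.

Lemma phiD (a b : E) : phi (a + b) = phi a + phi b.
Proof. by rewrite /phi dec_xD dec_yD wedgeD addrACA. Qed.
Lemma psiD (a b : E) : psi (a + b) = psi a + psi b.
Proof. by rewrite /psi dec_yD wedgeD. Qed.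
Lemma phi0 : phi 0 = 0.
Proof. by apply: (addrI (phi 0)); rewrite addr0 -phiD addr0. Qed.
Lemma psi0 : psi 0 = 0.
Proof. by apply: (addrI (psi 0)); rewrite addr0 -psiD addr0. Qed.

Hypothesis (ih : i != h) (jh : j != h).

Definition Q1 := [pred T : {set 'I_n} | (#|T| == k) && (h \notin T)].
Definition Q2 := [pred T : {set 'I_n} | (#|T| == k) && (h \in T)].

Definition closedQ (Q : pred {set 'I_n}) :=
  forall T : {set 'I_n}, j \notin T -> i \notin T -> Q (j |: T) -> Q (i |: T).

Lemma closedQ1 : closedQ Q1.
Proof.
move=> T jT iT; rewrite !inE !cardsU1 jT iT /=.
by rewrite (eq_sym h j) (negbTE jh) (eq_sym h i) (negbTE ih).
Qed.
Lemma closedQ2 : closedQ Q2.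
Proof.
move=> T jT iT; rewrite !inE !cardsU1 jT iT /=.
by rewrite (eq_sym h j) (negbTE jh) (eq_sym h i) (negbTE ih).
Qed.

Lemma phi_supp (Q : pred {set 'I_n}) m : closedQ Q -> supp Q m -> supp Q (phi m).
Proof.
move=> HQ Hm T QT; rewrite ffunE.
have -> : dec_x j m T = 0 by rewrite ffunE; case: ifP => // _; apply: Hm.
rewrite add0r wedge_evec; case: ifP => // iT; rewrite ffunE; case: ifP => jT.
  exact: (mulr0 _).
rewrite Hm ?mulr0 //; apply: contra QT => Qj; rewrite -(setD1K iT).
by apply: HQ => //; [rewrite jT | rewrite setD11].
Qed.

Lemma psi_supp (Q : pred {set 'I_n}) m : supp Q m -> supp Q (psi m).
Proof.
move=> Hm T QT; rewrite wedge_evec; case: ifP => // jT.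
by rewrite ffunE setD11 setD1K // Hm // !mulr0.
Qed.

Lemma shift_supp (Q : pred {set 'I_n}) m : closedQ Q -> supp Q m -> supp Q (slow_shift j i m).
Proof. move=> HQ Hm; rewrite slow_shiftE; case: ifP => _; [exact: phi_supp | exact: psi_supp]. Qed.

Lemma extk_off_supp v : v \in extk_off F k h -> supp Q1 v.
Proof.
apply: span_supp => x /mapP [A]; rewrite mem_enum => HA ->.
exact: ebas_supp.
Qed.

Lemma supp_extk_off v : supp Q1 v -> v \in extk_off F k h.
Proof.
move=> Hv; apply: (supp_mem _ _ _ Hv) => T QT; apply: memv_span; apply/mapP.
by exists T; rewrite // mem_enum.
Qed.

Lemma ewedge_off_supp v : v \in ewedge_off F k h -> supp Q2 v.
Proof.
apply: span_supp => x /mapP [A]; rewrite mem_enum inE => /andP [HA hA] ->.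
rewrite wedge_ebas //; apply: suppZ; apply: ebas_supp.
by rewrite inE cardsU1 hA add1n (eqP HA) setU11 eqxx.
Qed.

Lemma supp_ewedge_off v : supp Q2 v -> v \in ewedge_off F k h.
Proof.
move=> Hv; apply: (supp_mem _ _ _ Hv) => T /andP [/eqP HT hT].
have -> : ebas F T = (wsign F [set h] (T :\ h))^-1 *: wedge (evec F h) (ebas F (T :\ h)).
  by rewrite wedge_ebas ?setD11 // setD1K // scalerA mulVf ?wsign_neq0 // scale1r.
apply: memvZ; apply: memv_span; apply/mapP; exists (T :\ h) => //.
by rewrite mem_enum inE setD11 andbT -HT (cardsD1 h T) hT add1n.
Qed.

Lemma Q12 T : ~~ Q1 T || ~~ Q2 T.
Proof. by rewrite !inE; case: (h \in T); rewrite /= ?andbF ?andbT ?orbT. Qed.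


Local Notation Ns := (slow_shift_sp j i).

Lemma Ns0 (W : {vspace E}) : Ns W 0.
Proof. by exists [::]; split => //; exact: mem0v. Qed.

Lemma NsD (W : {vspace E}) p q : Ns W p -> Ns W q -> Ns W (p + q).
Proof.
move=> [s1 [H1 P1]] [s2 [H2 P2]]; exists (s1 ++ s2); split.
  by move=> m; rewrite mem_cat => /orP [/H1|/H2].
by rewrite map_cat span_cat; apply: memv_add.
Qed.

Lemma NsZ (W : {vspace E}) (c : F) p : Ns W p -> Ns W (c *: p).
Proof. by move=> [s [H P]]; exists s; split => //; apply: memvZ. Qed.

Lemma Ns1 (W : {vspace E}) m : m \in W -> m != 0 -> Ns W (slow_shift j i m).
Proof.
move=> mW m0; exists [:: m]; split.
  by move=> m'; rewrite inE => /eqP ->; rewrite mW m0.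
by apply: memv_span; rewrite mem_head.
Qed.

Lemma NsS (W1 W2 : {vspace E}) v : (W1 <= W2)%VS -> Ns W1 v -> Ns W2 v.
Proof.
move=> /subvP HW [s [H P]]; exists s; split => // m /H /andP [m1 m0].
by rewrite HW.
Qed.

Lemma Ns_supp (Q : pred {set 'I_n}) (W : {vspace E}) v :
  closedQ Q -> (forall m, m \in W -> supp Q m) -> Ns W v -> supp Q v.
Proof.
move=> HQ HW [s [Hs Hv]]; apply: (span_supp _ _ _ _ Hv) => x /mapP [m Hm ->].
apply: shift_supp => //; move/andP: (Hs m Hm) => [mW _]; exact: HW.
Qed.

Lemma Ns_phi (W : {vspace E}) a : a \in W -> Ns W (phi a) /\ (phi a = 0 -> Ns W (psi a)).
Proof.
move=> aW; have [->|a0] := eqVneq a 0.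
  by rewrite phi0 psi0; split => [|_]; exact: Ns0.
have := Ns1 _ _ aW a0; rewrite slow_shiftE.
case: eqP => [E0|N0] /= H.
  by rewrite E0; split => [|_ //]; exact: Ns0.
by split => // E0.
Qed.

Lemma main (L : {vspace E}) :
  (L :&: extk_off F k h + L :&: ewedge_off F k h)%VS = L ->
  is_dsum (slow_shift_sp j i L)
          (slow_shift_sp j i (L :&: extk_off F k h)%VS)
          (slow_shift_sp j i (L :&: ewedge_off F k h)%VS)
  /\
  is_dsum (slow_shift_sp j i L)
          (fun v => slow_shift_sp j i L v /\ v \in extk_off F k h)
          (fun v => slow_shift_sp j i L v /\ v \in ewedge_off F k h).
Proof.
move=> HL.
set A := (L :&: extk_off F k h)%VS; set B := (L :&: ewedge_off F k h)%VS.
have suppA m : m \in A -> supp Q1 m by move=> /memv_capP [_ /extk_off_supp].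
have suppB m : m \in B -> supp Q2 m by move=> /memv_capP [_ /ewedge_off_supp].
have NsA v : Ns A v -> supp Q1 v by apply: Ns_supp; [exact: closedQ1|exact: suppA].
have NsB v : Ns B v -> supp Q2 v by apply: Ns_supp; [exact: closedQ2|exact: suppB].
have AL : (A <= L)%VS by apply: capvSl.
have BL : (B <= L)%VS by apply: capvSl.
have dec v : Ns L v -> exists p q, [/\ Ns A p, Ns B q & v = p + q].
  move=> [s [Hs Hv]]; apply: (span_ind (fun v => exists p q, [/\ Ns A p, Ns B q & v = p + q]) _ _ _ _ _ _ Hv).
  - by exists 0, 0; split; [exact: Ns0|exact: Ns0|rewrite addr0].
  - move=> x y [p1 [q1 [Hp1 Hq1 ->]]] [p2 [q2 [Hp2 Hq2 ->]]].
    by exists (p1 + p2), (q1 + q2); split; [exact: NsD|exact: NsD|rewrite addrACA].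
  - move=> c x [p [q [Hp Hq ->]]].
    by exists (c *: p), (c *: q); split; [exact: NsZ|exact: NsZ|rewrite scalerDr].
  move=> x /mapP [m Hm ->]; move/andP: (Hs m Hm) => [mL m0].
  rewrite -HL in mL; case/memv_addP: mL => a aA [b bB mab].
  have [Pa Sa] := Ns_phi _ _ aA; have [Pb Sb] := Ns_phi _ _ bB.
  rewrite slow_shiftE mab phiD psiD; case: eqP => [H|_] /=; last first.
    by exists (phi a), (phi b); split.
  have pa0 : phi a = 0.
    apply: (supp_disj _ _ _ Q12). exact: phi_supp _ _ closedQ1 (suppA _ aA).
    have -> : phi a = (-1) *: phi b by rewrite scaleN1r; apply/eqP; rewrite -addr_eq0 H.
    exact: suppZ (phi_supp _ _ closedQ2 (suppB _ bB)).
  have pb0 : phi b = 0 by rewrite -H pa0 add0r.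
  by exists (psi a), (psi b); split; [exact: Sa|exact: Sb|].
split; split.
- move=> v; split; first exact: dec.
  by move=> [p [q [Hp Hq ->]]]; apply: NsD; [exact: NsS _ _ _ AL Hp|exact: NsS _ _ _ BL Hq].
- move=> v Hp Hq; exact: (supp_disj _ _ _ Q12 (NsA _ Hp) (NsB _ Hq)).
- move=> v; split.
    move=> /dec [p [q [Hp Hq ->]]]; exists p, q; split => //.
      by split; [exact: NsS _ _ _ AL Hp|apply: supp_extk_off; exact: NsA].
    by split; [exact: NsS _ _ _ BL Hq|apply: supp_ewedge_off; exact: NsB].
  by move=> [p [q [[Hp _] [Hq _] ->]]]; exact: NsD.
- move=> v [_ Hp] [_ Hq].
  exact: (supp_disj _ _ _ Q12 (extk_off_supp _ Hp) (ewedge_off_supp _ Hq)).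
Qed.

End Helpers.

Theorem lemma3p4 (F : fieldType) (n : nat) (k : nat)
  (L : {vspace ext F n}) (h i j : 'I_n) :
  (2 \notin [pchar F])%N ->
  (L <= extk F n k)%VS ->
  (L :&: extk_off F k h + L :&: ewedge_off F k h)%VS = L ->
  directv (L :&: extk_off F k h + L :&: ewedge_off F k h)%VS ->
  (i < j)%N -> i != h -> j != h ->
  is_dsum (slow_shift_sp j i L)
          (slow_shift_sp j i (L :&: extk_off F k h)%VS)
          (slow_shift_sp j i (L :&: ewedge_off F k h)%VS)
  /\
  is_dsum (slow_shift_sp j i L)
          (fun v => slow_shift_sp j i L v /\ v \in extk_off F k h)
          (fun v => slow_shift_sp j i L v /\ v \in ewedge_off F k h).
Proof.
move=> _ _ HL _ _ ih jh; exact: main.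
Qed.
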